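(* Let $q$ be a prime power, $m\ge 2$ an integer, $n=q^m-1$, and $\delta$ an integer with $2\le\delta\le n$. The primitive, narrow-sense BCH code $\mathcal{BCH}(n,q;\delta)$ over $\mathbf{F}_q$ contains its Euclidean dual code if and only if $$\delta\le \delta_{\max}=q^{\lceil m/2\rceil}-1-(q-2)[m\text{ odd}].$$
   Context: Let $\alpha$ be a primitive element of $\mathbf{F}_{q^m}$ and $n=q^m-1$. For an integer $x$, the $q$-ary cyclotomic coset of $x$ modulo $n$ is $C_x=\{xq^k \bmod n \mid 0\le k<m\}$. For $2\le\delta\le n$, the primitive, narrow-sense BCH code $\mathcal{BCH}(n,q;\delta)$ of designed distance $\delta$ is the cyclic code of length $n$ over $\mathbf{F}_q$ with generator polynomial $g(x)=\prod_{z\in Z}(x-\alpha^z)$, where $Z=C_1\cup\cdots\cup C_{\delta-1}$ is its defining set. The Euclidean dual of $C\subseteq\mathbf{F}_q^n$ is $C^\perp=\{y\in\mathbf{F}_q^n\mid x\cdot y=0\ \forall x\in C\}$. Iverson notation: $[P]=1$ if $P$ holds and $0$ otherwise. *)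

(* Defs.v *)
From HB Require Import structures.
From mathcomp Require Import all_boot all_order all_algebra all_field.
Set Implicit Arguments. Unset Strict Implicit. Unset Printing Implicit Defensive.
Import GRing.Theory.
Local Open Scope ring_scope.

Definition in_cyclotomic_coset (q m n x z : nat) : bool :=
  [exists k : 'I_m, z == (x * q ^ k) %% n]%N.

Definition in_BCH_defining_set (q m n delta z : nat) : bool :=
  [exists x : 'I_delta, (1 <= x)%N && in_cyclotomic_coset q m n x z].

Definition BCH_genpoly (F : fieldType) (L : fieldExtType F) (q m n delta : nat)
  (alpha : L) : {poly L} :=
  \prod_(z < n | in_BCH_defining_set q m n delta z) ('X - (alpha ^+ z)%:P).

Definition word_poly (F : fieldType) (n : nat) (c : 'rV[F]_n) : {poly F} :=
  \sum_(i < n) c ord0 i *: 'X^i.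

Definition BCH_code (F : fieldType) (L : fieldExtType F) (q m delta : nat)
  (alpha : L) (c : 'rV[F]_(q ^ m - 1)) : Prop :=
  BCH_genpoly q m (q ^ m - 1) delta alpha %| map_poly (in_alg L) (word_poly c).

Definition edot (F : fieldType) (n : nat) (x y : 'rV[F]_n) : F :=
  \sum_(i < n) x ord0 i * y ord0 i.

Definition euclidean_dual (F : fieldType) (n : nat) (C : 'rV[F]_n -> Prop)
  (y : 'rV[F]_n) : Prop :=
  forall x, C x -> edot x y = 0.

Definition delta_max (q m : nat) : nat :=
  (q ^ uphalf m - 1 - (q - 2) * odd m)%N.

Arguments BCH_code {F L} q m delta alpha c.
Arguments BCH_genpoly {F L} q m n delta alpha.

(* Main.v *)
Require Import Defs.
From HB Require Import structures.
From mathcomp Require Import all_boot all_order all_algebra all_field all_fingroup all_solvable.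
From mathcomp Require Import zify.
Set Implicit Arguments. Unset Strict Implicit. Unset Printing Implicit Defensive.
Import GRing.Theory.
Local Open Scope ring_scope.
Lemma exp_eq (q a b : nat) : a = b -> (q ^ a = q ^ b)%N.
Proof. by move->. Qed.

Lemma nt_bound (q m j x : nat) : (1 < q)%N -> (1 < m)%N -> (j < m)%N ->
  (x < delta_max q m)%N ->
  exists u r, (x * q ^ j = u * (q ^ m - 1) + r)%N /\ (r + delta_max q m <= q ^ m - 1)%N.
Proof.
move=> q1 m1 jm xD.
have q0 : (0 < q)%N by lia.
pose s := (m - j)%N.
have hm : (q ^ m = q ^ s * q ^ j)%N by rewrite -expnD; apply: exp_eq; lia.
pose u := (x %/ q ^ s)%N; pose v := (x %% q ^ s)%N.
have hx : x = (u * q ^ s + v)%N by exact: divn_eq.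
have hv : (v < q ^ s)%N by rewrite ltn_pmod // expn_gt0 q0.
have Bpos : (0 < q ^ j)%N by rewrite expn_gt0 q0.
have Qpos : (0 < q ^ s)%N by rewrite expn_gt0 q0.
exists u, (u + v * q ^ j)%N; split.
  rewrite hm {1}hx. nia.
move: xD; rewrite /delta_max.
have [t [ht|ht]] : exists t, m = (t + t)%N \/ m = (t + t).+1.
  exists m./2; have := odd_double_half m; rewrite -addnn; case: (odd m) => /= H; [right|left]; lia.
-
  have -> : odd m = false by rewrite ht addnn odd_double.
  have -> : uphalf m = t by rewrite ht addnn uphalf_double.
  have T1 : (2 <= q ^ t)%N by rewrite (leq_trans q1) // -{1}(expn1 q) leq_pexp2l //; lia.
  have hTT : (q ^ m = q ^ t * q ^ t)%N by rewrite -expnD ht.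
  rewrite muln0 subn0 => xT.
  case: (leqP j t) => jt.
  + have Qt : (q ^ t <= q ^ s)%N by apply: leq_pexp2l => //; lia.
    have Bt : (q ^ j <= q ^ t)%N by apply: leq_pexp2l.
    have u0 : u = 0%N by rewrite /u divn_small //; lia.
    have vx : v = x by rewrite /v modn_small //; lia.
    rewrite u0 vx; nia.
  + pose C := (q ^ (j - t))%N.
    have QC : (q ^ s * C = q ^ t)%N by rewrite -expnD; apply: exp_eq; lia.
    have BC : (q ^ j = q ^ t * C)%N by rewrite -expnD; apply: exp_eq; lia.
    have uC : (u < C)%N.
      have h : (q ^ s * u < q ^ s * C)%N by rewrite QC; nia.
      by rewrite ltn_pmul2l in h.
    rewrite BC. nia.
-
  have -> : odd m = true by rewrite ht addnn /= odd_double.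
  have -> : uphalf m = t.+1 by rewrite ht addnn uphalfE /= doubleK.
  have t1 : (1 <= t)%N by lia.
  have T1 : (q <= q ^ t)%N by rewrite -{1}(expn1 q) leq_pexp2l //.
  have hTT : (q ^ m = q * (q ^ t * q ^ t))%N by rewrite -expnD -expnS ht.
  rewrite expnS muln1 => xT.
  case: (leqP j t) => jt.
  + have Qt : (q * q ^ t <= q ^ s)%N by rewrite -expnS; apply: leq_pexp2l => //; lia.
    have Bt : (q ^ j <= q ^ t)%N by apply: leq_pexp2l.
    have u0 : u = 0%N by rewrite /u divn_small //; lia.
    have vx : v = x by rewrite /v modn_small //; lia.
    rewrite u0 vx; nia.
  case: (ltngtP j t.+1) => jt1; first lia.
  + pose C := (q ^ (j - t))%N.
    have QC : (q ^ s * C = q * q ^ t)%N by rewrite -expnD -expnS; apply: exp_eq; lia.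
    have BC : (q ^ j = q ^ t * C)%N by rewrite -expnD; apply: exp_eq; lia.
    have Cq : (q * q <= C)%N by change (q ^ 2 <= C)%N; rewrite /C; apply: leq_pexp2l => //; lia.
    have uC : (u < C)%N.
      have h : (q ^ s * u < q ^ s * C)%N by rewrite QC; nia.
      by rewrite ltn_pmul2l in h.
    rewrite BC. nia.
  + have st : s = t by rewrite /s; lia.
    have Bq : (q ^ j = q * q ^ t)%N by rewrite jt1 expnS.
    rewrite st in hx hv Qpos *.
    have uq : (u < q)%N.
      have h : (q ^ t * u < q ^ t * q)%N by nia.
      by rewrite ltn_pmul2l in h.
    rewrite Bq.
    case: (ltngtP u q.-1) => uq1.
    * nia.
    * lia.
    * rewrite uq1 in hx *. nia.
Qed.

Lemma nt_no (q m x x' j : nat) : (1 < q)%N -> (1 < m)%N -> (0 < x')%N ->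
  (x < delta_max q m)%N -> (x' < delta_max q m)%N -> (j < m)%N ->
  ~~ (q ^ m - 1 %| x * q ^ j + x')%N.
Proof.
move=> q1 m1 x'0 xD x'D jm.
have [u [r [E B]]] := @nt_bound q m j x q1 m1 jm xD.
rewrite E -addnA dvdn_addr ?dvdn_mull //.
apply/negP => /dvdn_leq; lia.
Qed.

Lemma nt_yes (q m : nat) : (1 < q)%N -> (1 < m)%N ->
  exists x x' j, [/\ (0 < x <= delta_max q m)%N, (0 < x' <= delta_max q m)%N,
     (j < m)%N & (x * q ^ j + x' = q ^ m - 1)%N].
Proof.
move=> q1 m1; have q0 : (0 < q)%N by lia.
rewrite /delta_max.
have [t [ht|ht]] : exists t, m = (t + t)%N \/ m = (t + t).+1.
  exists m./2; have := odd_double_half m; rewrite -addnn; case: (odd m) => /= H; [right|left]; lia.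
- have -> : odd m = false by rewrite ht addnn odd_double.
  have -> : uphalf m = t by rewrite ht addnn uphalf_double.
  have T1 : (2 <= q ^ t)%N by rewrite (leq_trans q1) // -{1}(expn1 q) leq_pexp2l //; lia.
  have hTT : (q ^ m = q ^ t * q ^ t)%N by rewrite -expnD ht.
  exists (q ^ t - 1)%N, (q ^ t - 1)%N, t; split; try lia; rewrite hTT; nia.
- have -> : odd m = true by rewrite ht addnn /= odd_double.
  have -> : uphalf m = t.+1 by rewrite ht addnn uphalfE /= doubleK.
  have t1 : (1 <= t)%N by lia.
  have T1 : (q <= q ^ t)%N by rewrite -{1}(expn1 q) leq_pexp2l //.
  have hTT : (q ^ m = q * (q ^ t * q ^ t))%N by rewrite -expnD -expnS ht.
  rewrite expnS muln1.
  exists (q * q ^ t - q + 1)%N, (q * q ^ t - q ^ t - 1)%N, t; split; try nia.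
Qed.

Section Alg.
Variables (F : finFieldType) (L : fieldExtType F) (q m : nat) (alpha : L).
Hypotheses (hq : #|F| = q) (m1 : (1 < m)%N)
  (prim : (q ^ m - 1)%N.-primitive_root alpha).

Lemma q1 : (1 < q)%N.
Proof. by rewrite -hq finNzRing_gt1. Qed.

Lemma q0 : (0 < q)%N.
Proof. by have := q1; lia. Qed.

Lemma qm_big : (4 <= q ^ m)%N.
Proof.
have := q1 => h; have : (q ^ 2 <= q ^ m)%N by rewrite leq_pexp2l // q0.
by change (q ^ 2)%N with (q * q)%N; nia.
Qed.

Lemma n_pos : (0 < q ^ m - 1)%N.
Proof. by have := qm_big; lia. Qed.

Lemma pnat_q : [pchar L].-nat q.
Proof.
have [p' pr' /abelem_pgroup pg] := is_abelemP (finField_is_abelem F).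
move: pg; rewrite /pgroup cardsT hq => pg.
have [k qk] := p_natP pg.
have pF : p' \in [pchar F] by apply: (@card_finPcharP _ _ k) => //; rewrite hq.
have pL : p' \in [pchar L] by rewrite pchar_lalg.
by rewrite (eq_pnat _ (pcharf_eq pL)).
Qed.

Lemma qL0 : (q%:R : L) = 0.
Proof.
have pq := pnat_q.
have [p pr pL] : {p | prime p & p \in [pchar L]}.
  have [p pr pF] := finPcharP F; exists p => //; by rewrite pchar_lalg.
move: pq; rewrite (eq_pnat _ (pcharf_eq pL)) => /p_natP [k qk].
have k0 : k != 0%N by apply/eqP => k0; move: q1; rewrite qk k0.
by rewrite qk natrX (pcharf0 pL) expr0n (negbTE k0).
Qed.

Lemma nL : ((q ^ m - 1)%N%:R : L) = -1.
Proof.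
have m0 : (m == 0)%N = false by have := m1; lia.
by rewrite natrB ?expn_gt0 ?q0 // natrX qL0 expr0n m0 sub0r.
Qed.

Lemma frD k (a b : L) : (a + b) ^+ (q ^ k) = a ^+ (q ^ k) + b ^+ (q ^ k).
Proof. by apply: exprDn_pchar; rewrite pnatX pnat_q. Qed.

Lemma fr_sum k (I : Type) (r : seq I) (P : pred I) (f : I -> L) :
  (\sum_(i <- r | P i) f i) ^+ (q ^ k) = \sum_(i <- r | P i) f i ^+ (q ^ k).
Proof.
apply: (big_morph (fun x => x ^+ (q ^ k))); first exact: frD.
by rewrite expr0n expn_eq0; have := q0; case: q.
Qed.

Lemma frF k (a : F) : (in_alg L a) ^+ (q ^ k) = in_alg L a.
Proof.
elim: k => [|k IH]; first by rewrite expr1.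
by rewrite expnSr exprM IH -rmorphXn /= -hq expf_card.
Qed.

Lemma alpha_nz : alpha != 0.
Proof.
apply/eqP => a0; have := prim_expr_order prim; rewrite a0 expr0n.
by have := n_pos; case: (q ^ m - 1)%N => // n' _ /eqP; rewrite eq_sym oner_eq0.
Qed.

Lemma alpha_qm : alpha ^+ (q ^ m) = alpha.
Proof.
have -> : (q ^ m = (q ^ m - 1).+1)%N by have := n_pos; lia.
by rewrite exprS (prim_expr_order prim) mulr1.
Qed.

Definition Tr (x : L) := \sum_(k < m) x ^+ (q ^ k).

Lemma Tr_fix x : x ^+ (q ^ m) = x -> Tr x ^+ q = Tr x.
Proof.
move=> hx; rewrite -{1}(expn1 q) /Tr fr_sum.
have em : m = (m - 1).+1 by have := m1; lia.
rewrite em in hx *.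
rewrite big_ord_recr big_ord_recl /= -exprM -expnSr hx expn0 expr1 addrC; congr (_ + _).
by apply: eq_bigr => i _; rewrite -exprM -expnSr.
Qed.

Lemma fix_inF (t : L) : t ^+ q = t -> exists a : F, in_alg L a = t.
Proof.
move=> ht; case: (boolP [exists a : F, in_alg L a == t]) => [/existsP [a /eqP]|]; first by exists a.
move=> /existsPn hn; exfalso.
pose p : {poly L} := 'X^q - 'X.
have sp : size p = q.+1 by rewrite size_polyDl ?size_polyXn // size_polyN size_polyX ltnS q1.
have p0 : p != 0 by rewrite -size_poly_eq0 sp.
pose rs := t :: [seq in_alg L a | a <- enum F].
have : (size rs < size p)%N.
  apply: max_poly_roots => //.
    apply/allP => z; rewrite inE => /orP [/eqP ->|/mapP [a _ ->]];
      rewrite /root /p !hornerE ?ht ?subrr //.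
    by rewrite -rmorphXn /= -hq expf_card subrr.
  rewrite /= map_inj_uniq ?enum_uniq ?andbT; last exact: (fmorph_inj (in_alg L)).
  by apply/mapP => [[a _ /eqP]]; rewrite eq_sym (negbTE (hn a)).
by rewrite sp /= size_map -cardE hq ltnn.
Qed.

Definition toF (t : L) : F := if [pick a : F | in_alg L a == t] is Some a then a else 0.

Lemma toFK t : t ^+ q = t -> in_alg L (toF t) = t.
Proof.
move=> /fix_inF [a ha]; rewrite /toF; case: pickP => [b /eqP //|/(_ a)].
by rewrite ha eqxx.
Qed.



Local Notation n := (q ^ m - 1)%N.

Lemma alpha_inj (i j : 'I_n) : alpha ^+ i = alpha ^+ j -> i = j.
Proof.
move/eqP; rewrite (eq_prim_root_expr prim) !modn_small // => /eqP h.
exact: val_inj.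
Qed.

Definition G (e : nat) : L := \sum_(i < n) (alpha ^+ e) ^+ i.

Lemma GE e : G e = if (n %| e)%N then n%:R else 0.
Proof.
rewrite /G; case: ifP => [/dvdnP [c ->]|nd].
  have a1 : alpha ^+ (c * n) = 1 by rewrite mulnC exprM (prim_expr_order prim) expr1n.
  under eq_bigr => i _ do rewrite a1 expr1n.
  by rewrite sumr_const card_ord.
have ne : alpha ^+ e - 1 != 0.
  rewrite subr_eq0 -(expr0 alpha) (eq_prim_root_expr prim) mod0n.
  by rewrite -/(dvdn _ _) nd.
have : (alpha ^+ e - 1) * \sum_(i < n) (alpha ^+ e) ^+ i = 0.
  by rewrite -subrX1 exprAC (prim_expr_order prim) expr1n subrr.
by move/eqP; rewrite mulf_eq0 (negbTE ne) /= => /eqP.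
Qed.

Lemma nondeg (a : 'I_m -> L) (j : 'I_m) : a j != 0 ->
  exists2 b : L, b ^+ (q ^ m) = b & \sum_(k < m) a k * b ^+ (q ^ k) != 0.
Proof.
move=> aj.
pose P : {poly L} := \sum_(k < m) a k *: 'X^(q ^ k).
have cP : P`_(q ^ j) = a j.
  rewrite coef_sum (bigD1 j) //= coefZ coefXn eqxx mulr1 big1 ?addr0 // => k kj.
  rewrite coefZ coefXn eqn_exp2l ?q1 // (_ : (j == k :> nat) = false) ?mulr0 //.
  by apply/negbTE; rewrite eq_sym; exact: kj.
have P0 : P != 0 by apply/eqP => P0; move: aj; rewrite -cP P0 coef0 eqxx.
have sP : (size P <= (q ^ (m - 1)).+1)%N.
  apply: (leq_trans (size_sum _ _ _)); apply/bigmax_leqP => k _.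
  apply: (leq_trans (size_scale_leq _ _)); rewrite size_polyXn ltnS leq_pexp2l ?q0 //.
  by have := ltn_ord k; lia.
pose rs := 0 :: [seq alpha ^+ i | i <- iota 0 n].
have urs : uniq rs.
  rewrite /= map_inj_in_uniq ?iota_uniq ?andbT.
    by apply/mapP => [[i _ /eqP]]; rewrite eq_sym expf_eq0 (negbTE alpha_nz) andbF.
  move=> i k; rewrite !mem_iota !add0n => ii ik /eqP.
  by rewrite (eq_prim_root_expr prim) !modn_small // => /eqP.
case: (boolP (all (root P) rs)) => [allr|].
  have := max_poly_roots P0 allr urs.
  rewrite /= size_map size_iota => h; exfalso.
  have qe : (q ^ m = q * q ^ (m - 1))%N by rewrite -expnS (_ : (m - 1).+1 = m) //; have := m1; lia.
  have : (2 <= q ^ (m - 1))%N.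
    by rewrite (leq_trans q1) // -{1}(expn1 q) leq_pexp2l ?q0 //; have := m1; lia.
  have : (2 * q ^ (m-1) <= q * q ^ (m-1))%N by rewrite leq_mul2r q1 orbT.
  move: h sP; rewrite qe; move: (q ^ (m - 1))%N (size P) => Q sz; nia.
move=> /allPn [b brs nr]; exists b.
  move: brs; rewrite inE => /orP [/eqP ->|/mapP [i _ ->]].
    by rewrite expr0n expn_eq0; have := q0; case: q.
  by rewrite exprAC alpha_qm.
move: nr; rewrite /root /P horner_sum.
by under eq_bigr do rewrite hornerZ hornerXn.
Qed.

Lemma nondeg_aux (P : Prop) : P -> P. Proof. by []. Qed.

Definition W (c : 'rV[F]_n) (e : nat) : L :=
  (map_poly (in_alg L) (word_poly c)).[alpha ^+ e].

Lemma WE c e : W c e = \sum_(i < n) in_alg L (c ord0 i) * alpha ^+ (e * i).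
Proof.
rewrite /W /word_poly rmorph_sum horner_sum; apply: eq_bigr => i _ /=.
by rewrite map_polyZ map_polyXn hornerZ hornerXn exprM.
Qed.

Definition tw (b : L) (z : nat) : 'rV[F]_n :=
  \row_(i < n) toF (Tr (b * alpha ^+ (z * i))).

Lemma twE b z i : b ^+ (q ^ m) = b ->
  in_alg L (tw b z ord0 i) = Tr (b * alpha ^+ (z * i)).
Proof.
move=> hb; rewrite mxE toFK //; apply: Tr_fix.
by rewrite exprMn hb exprAC alpha_qm.
Qed.

Lemma edot_tw c b z : b ^+ (q ^ m) = b ->
  in_alg L (edot c (tw b z)) = Tr (b * W c z).
Proof.
move=> hb; rewrite /edot (big_morph (in_alg L) (rmorphD _) (rmorph0 _)) /Tr WE.
have iM : forall a a' : F, in_alg L (a * a') = in_alg L a * in_alg L a' by move=> a a'; rewrite rmorphM.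
under eq_bigr => i _ do rewrite iM.
under eq_bigr => i _ do rewrite twE // /Tr mulr_sumr.
rewrite exchange_big /=; apply: eq_bigr => k _.
rewrite mulr_sumr fr_sum; apply: eq_bigr => i _.
by rewrite !exprMn frF mulrCA.
Qed.

Lemma W_tw b z w : b ^+ (q ^ m) = b ->
  W (tw b z) w = \sum_(k < m) b ^+ (q ^ k) * G (z * q ^ k + w).
Proof.
move=> hb; rewrite WE.
under eq_bigr => i _ do rewrite twE // /Tr mulr_suml.
rewrite exchange_big /=; apply: eq_bigr => k _.
rewrite /G mulr_sumr; apply: eq_bigr => i _.
rewrite exprMn -mulrA -!exprM -exprD; congr (_ * alpha ^+ _).
by rewrite mulnDl mulnAC.
Qed.

Lemma edotC (x y : 'rV[F]_n) : edot x y = edot y x.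
Proof. by apply: eq_bigr => i _; rewrite mulrC. Qed.

Lemma m_pos : (0 < m)%N.
Proof. by have := m1; lia. Qed.

Lemma qm_eq : (q ^ m = n + 1)%N.
Proof. by have := n_pos; lia. Qed.

Lemma powS_mod N t : exists c, ((N.+1) ^ t = c * N + 1)%N.
Proof.
elim: t => [|t [c hc]]; first by exists 0%N.
by exists (c * N + c + 1)%N; rewrite expnS hc; nia.
Qed.

Lemma qpow_mod e : exists c, (q ^ e = c * n + q ^ (e %% m))%N.
Proof.
have [c hc0] := powS_mod n (e %/ m)%N.
have qm : (q ^ m = n.+1)%N by have := n_pos; lia.
have hc : ((q ^ m) ^ (e %/ m) = c * n + 1)%N by rewrite {1}qm.
exists (c * q ^ (e %% m))%N.
by rewrite {1}(divn_eq e m) expnD (mulnC (e %/ m)%N) expnM hc mulnDl mul1n mulnAC.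
Qed.

Lemma ar1 (XA K YB c1 c2 N z w : nat) : XA = (c1 * N + z)%N -> YB = (c2 * N + w)%N ->
  (XA * K + YB = (c1 * K + c2) * N + (z * K + w))%N.
Proof. move=> -> ->; nia. Qed.

Lemma ar2 (x x' A K B D N c3 Qj Qm Qe : nat) : (B * D = Qm)%N -> (A * K * D = Qe)%N ->
  Qe = (c3 * N + Qj)%N -> Qm = (N + 1)%N ->
  ((x * A * K + x' * B) * D = (x * c3 + x') * N + (x * Qj + x'))%N.
Proof.
move=> h1 h2 h3 h4.
have -> : ((x * A * K + x' * B) * D = x * (A * K * D) + x' * (B * D))%N.
  by rewrite mulnDl -!mulnA.
rewrite h1 h2 h3 h4; nia.
Qed.

Section Delta.
Variable delta : nat.
Local Notation S := (in_BCH_defining_set q m n delta).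

Lemma BCH_iff c : BCH_code q m delta alpha c <-> (forall z : 'I_n, S z -> W c z = 0).
Proof.
rewrite /BCH_code /BCH_genpoly; split.
  move=> /dvdpP [r hr] z Sz; rewrite /W hr hornerM horner_prod (bigD1 z) //=.
  by rewrite hornerXsubC subrr mul0r mulr0.
move=> h.
rewrite -big_filter -(big_map (fun z : 'I_n => alpha ^+ z) xpredT (fun x => 'X - x%:P)).
set rs := map _ _.
have [] := @uniq_roots_prod_XsubC _ (map_poly (in_alg L) (word_poly c)) rs.
- apply/allP => x /mapP [z]; rewrite mem_filter => /andP [Sz _] ->.
  by rewrite /root -/(W c z) h.
- rewrite uniq_rootsE map_inj_uniq ?filter_uniq ?index_enum_uniq //.
  by move=> i j; apply: alpha_inj.
by move=> r ->; apply: dvdp_mull.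
Qed.

Hypothesis hd : (delta <= n)%N.

Lemma inS_elim (z : nat) : S z ->
  exists x k, [/\ (0 < x < delta)%N, (k < m)%N & z = (x * q ^ k %% n)%N].
Proof.
move=> /existsP [x /andP [x1 /existsP [k /eqP ->]]].
by exists x, k; rewrite x1 ltn_ord.
Qed.

Lemma inS_intro (x : nat) : (0 < x < delta)%N -> S x.
Proof.
move=> /andP [x0 xd]; apply/existsP; exists (Ordinal xd); rewrite /= x0.
apply/existsP; exists (Ordinal m_pos) => /=.
by rewrite expn0 muln1 modn_small //; lia.
Qed.

Lemma cond_arith (z w k : nat) : S z -> S w -> (k < m)%N -> (n %| z * q ^ k + w)%N ->
  exists x x' j, [/\ (0 < x < delta)%N, (0 < x' < delta)%N, (j < m)%N &
                   (n %| x * q ^ j + x')%N].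
Proof.
move=> /inS_elim [x [a [hx ha ->]]] /inS_elim [x' [b [hx' hb ->]]] hk hdv.
exists x, x', ((a + k + (m - b)) %% m)%N; split => //; first by rewrite ltn_mod m_pos.
have [c1 E1] : exists c, (x * q ^ a = c * n + x * q ^ a %% n)%N.
  by exists (x * q ^ a %/ n)%N; exact: divn_eq.
have [c2 E2] : exists c, (x' * q ^ b = c * n + x' * q ^ b %% n)%N.
  by exists (x' * q ^ b %/ n)%N; exact: divn_eq.
have d1 : (n %| (x * q ^ a * q ^ k + x' * q ^ b) * q ^ (m - b))%N.
  apply: dvdn_mulr.
  rewrite (ar1 _ E1 E2).
  by rewrite dvdn_addr ?dvdn_mull.
have [c3 E3] := qpow_mod (a + k + (m - b)).
have qm := qm_eq.
have EE : ((x * q ^ a * q ^ k + x' * q ^ b) * q ^ (m - b) =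
    (x * c3 + x') * n + (x * q ^ ((a + k + (m - b)) %% m) + x'))%N.
  have eb : (q ^ b * q ^ (m - b) = q ^ m)%N by rewrite -expnD subnKC // ltnW.
  have ea : (q ^ a * q ^ k * q ^ (m - b) = q ^ (a + k + (m - b)))%N by rewrite !expnD.
  exact: ar2 eb ea E3 qm.
rewrite EE in d1.
by rewrite dvdn_addr ?dvdn_mull in d1.
Qed.

Lemma cond_dc :
  (forall x x' j, (0 < x < delta)%N -> (0 < x' < delta)%N -> (j < m)%N ->
     ~~ (n %| x * q ^ j + x')%N) ->
  forall y, euclidean_dual (BCH_code q m delta alpha) y -> BCH_code q m delta alpha y.
Proof.
move=> cond y dy; apply/BCH_iff => z Sz.
case: (eqVneq (W y z) 0) => // nz; exfalso.
have [b hb hne] := @nondeg (fun k : 'I_m => (W y z) ^+ (q ^ k)) (Ordinal m_pos)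
  (ltac:(by rewrite /= expn0 expr1)).
have Cb : BCH_code q m delta alpha (tw b z).
  apply/BCH_iff => w Sw; rewrite W_tw // big1 // => k _.
  rewrite GE; case: ifP => hdv; last by rewrite mulr0.
  have [x [x' [j [hx hx' hj hd']]]] := cond_arith Sz Sw (ltn_ord k) hdv.
  by move: (cond _ _ _ hx hx' hj); rewrite hd'.
have := dy _ Cb; rewrite edotC => /(congr1 (in_alg L)); rewrite edot_tw // rmorph0 /Tr.
move=> h; move: hne; rewrite (eq_bigr (fun k : 'I_m => (b * W y z) ^+ (q ^ k))) ?h ?eqxx //.
by move=> k _; rewrite exprMn mulrC.
Qed.

Lemma dc_cond :
  (forall y, euclidean_dual (BCH_code q m delta alpha) y -> BCH_code q m delta alpha y) ->
  forall x x' j, (0 < x < delta)%N -> (0 < x' < delta)%N -> (j < m)%N ->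
     ~~ (n %| x * q ^ j + x')%N.
Proof.
move=> hdc x x' j hx hx' hj; apply/negP => hdv.
have xn : (x < n)%N by case/andP: hx => _ h; exact: leq_trans h hd.
have x'n : (x' < n)%N by case/andP: hx' => _ h; exact: leq_trans h hd.
have [b hb hne] := @nondeg (fun k : 'I_m => G (x * q ^ k + x')) (Ordinal hj)
  (ltac:(by rewrite /= GE hdv nL oppr_eq0 oner_eq0)).
have dy : euclidean_dual (BCH_code q m delta alpha) (tw b x).
  move=> c Cc.
  have h : in_alg L (edot c (tw b x)) = 0.
    rewrite edot_tw //.
    rewrite ((BCH_iff c).1 Cc (Ordinal xn) (inS_intro hx)) mulr0 /Tr big1 // => k _.
    by rewrite expr0n expn_eq0; have := q0; case: q.
  by move/eqP: h; rewrite fmorph_eq0 => /eqP.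
have := (BCH_iff _).1 (hdc _ dy) (Ordinal x'n) (inS_intro hx').
rewrite /= W_tw // => h; move: hne.
rewrite (eq_bigr (fun k : 'I_m => b ^+ (q ^ k) * G (x * q ^ k + x'))) ?h ?eqxx //.
by move=> k _; rewrite mulrC.
Qed.

End Delta.

End Alg.

Theorem mainTheorem1 (F : finFieldType) (L : fieldExtType F)
  (q m delta : nat) (alpha : L) :
  #|F| = q ->
  (2 <= m)%N ->
  \dim {: L} = m ->
  (q ^ m - 1)%N.-primitive_root alpha ->
  (2 <= delta <= q ^ m - 1)%N ->
  ((forall y : 'rV[F]_(q ^ m - 1),
      euclidean_dual (BCH_code q m delta alpha) y -> BCH_code q m delta alpha y)
   <-> (delta <= delta_max q m)%N).
Proof.
move=> hq m2 _ prim /andP [d2 dn].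
have q1' := q1 hq.
split.
- move=> hdc; case: (leqP delta (delta_max q m)) => // Dlt; exfalso.
  have [x [x' [j [/andP [x0 xD] /andP [x'0 x'D] jm E]]]] := nt_yes q1' m2.
  have hx : (0 < x < delta)%N by rewrite x0 (leq_ltn_trans xD Dlt).
  have hx' : (0 < x' < delta)%N by rewrite x'0 (leq_ltn_trans x'D Dlt).
  by have := dc_cond hq m2 prim dn hdc hx hx' jm; rewrite E dvdnn.
- move=> hD; apply: (cond_dc hq m2 prim) => x x' j /andP [x0 xd] /andP [x'0 x'd] jm.
  apply: nt_no => //; exact: (leq_trans xd hD) || exact: (leq_trans x'd hD).
Qed.
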